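(* Let $n\ge 2$ and $1\le m\le n-1$ be integers, and let $\alpha=(\alpha_0,\dots,\alpha_m)$ and $\beta=(\beta_0,\dots,\beta_m)$ be sequences of complex numbers. Let $A = T^{(\alpha,m)} - H^{(\alpha,m)}$ and $B = T^{(\beta,m)} - H^{(\beta,m)}$, where $T^{(\xi,m)}$ and $H^{(\xi,m)}$ are the $n\times n$ matrices defined in the context. Assume that $B$ is invertible. Set $h = \frac{1}{n+1/2}$ and, for $j=1,\dots,n$, $$\lambda_j = \frac{\alpha_0 + 2\sum_{l=1}^{m}\alpha_l\cos(l j\pi h)}{\beta_0 + 2\sum_{l=1}^{m}\beta_l\cos(l j\pi h)},\qquad \boldsymbol{x}_j=(x_{j,1},\dots,x_{j,n})^T,\quad x_{j,k} = C\sin\!\big(j\pi(k-1/2)h\big),\ k=1,\dots,n,$$ where $C\neq 0$ is a constant. Then for every $j=1,\dots,n$, $(\lambda_j,\boldsymbol{x}_j)$ is an eigenpair of the generalised matrix eigenvalue problem $A\boldsymbol{x}=\lambda B\boldsymbol{x}$, i.e. $A\boldsymbol{x}_j=\lambda_j B\boldsymbol{x}_j$.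
   Context: For a sequence $\xi=(\xi_0,\xi_1,\dots,\xi_m)$ of complex numbers and $m\le n-1$, $T^{(\xi,m)}\in\mathbb{C}^{n\times n}$ is the symmetric banded Toeplitz matrix with entries $T^{(\xi,m)}_{j,j+k}=\xi_{|k|}$ if $|k|\le m$ (for all $j$ and integers $k$ with $1\le j, j+k\le n$) and all other entries $0$. $H^{(\xi,m)}\in\mathbb{C}^{n\times n}$ is the Hankel-type matrix with entries: $H^{(\xi,m)}_{j,k}=\xi_{j+k-1}$ for $j=1,\dots,m$ and $k=1,\dots,m-j+1$ (upper-left corner); $H^{(\xi,m)}_{n-j+1,\,n-k+1}=\xi_{j+k}$ for $j=1,\dots,m-1$ and $k=1,\dots,m-j$ (lower-right corner; this part is empty when $m=1$); and all other entries $0$. For example, for $m=2$ the matrix $A=T^{(\alpha,2)}-H^{(\alpha,2)}$ has first row $(\alpha_0-\alpha_1,\ \alpha_1-\alpha_2,\ \alpha_2,0,\dots)$, second row $(\alpha_1-\alpha_2,\ \alpha_0,\ \alpha_1,\ \alpha_2,0,\dots)$, and last diagonal entry $\alpha_0-\alpha_2$, with all other entries as in $T^{(\alpha,2)}$. *)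

(* Defs.v *)
From HB Require Import structures.
From mathcomp Require Import all_boot all_algebra.
From mathcomp Require Import reals trigo.
From mathcomp Require Export complex.
Set Implicit Arguments. Unset Strict Implicit. Unset Printing Implicit Defensive.
Import GRing.Theory Num.Theory.
Local Open Scope ring_scope.

(* Sequences xi = (xi_0,...,xi_m) are given as functions nat -> C; only the
   values xi_0..xi_m are ever used below. Matrices are indexed by 'I_n
   (0-based); r := i.+1, c := j.+1 are the paper's 1-based indices. *)

Definition toepT (C : pzRingType) (n m : nat) (xi : nat -> C) : 'M[C]_n :=
  \matrix_(i < n, j < n)
    let d := if (i <= j)%N then (j - i)%N else (i - j)%N in
    if (d <= m)%N then xi d else 0.

(* Hankel-type matrix H^(xi,m):
   H_{r,c} = xi_{r+c-1} for 1<=r<=m, 1<=c<=m-r+1 (upper-left corner);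
   H_{n-a+1, n-b+1} = xi_{a+b} for 1<=a<=m-1, 1<=b<=m-a (lower-right corner);
   0 otherwise. (The two corners are disjoint.) *)
Definition hankH (C : pzRingType) (n m : nat) (xi : nat -> C) : 'M[C]_n :=
  \matrix_(i < n, j < n)
    let r := i.+1 in let c := j.+1 in
    let a := (n - r + 1)%N in let b := (n - c + 1)%N in
    if [&& (1 <= r <= m)%N & (1 <= c <= m - r + 1)%N] then xi (r + c - 1)%N
    else if [&& (1 <= a <= m - 1)%N & (1 <= b <= m - a)%N] then xi (a + b)%N
    else 0.

Definition symb (R : realType) (m : nat) (xi : nat -> R[i]) (theta : R) : R[i] :=
  xi 0%N + 2%:R * \sum_(1 <= l < m.+1) xi l * ((cos (l%:R * theta))%:C)%C.

(* Main.v *)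
Require Import Defs.
From HB Require Import structures.
From mathcomp Require Import all_boot all_algebra.
From mathcomp Require Import reals trigo.
From mathcomp Require Import complex.
From mathcomp Require Import zify.
Import GRing.Theory Num.Theory.
Local Open Scope ring_scope.

Lemma eqA (i k l : nat) : (i == k + l)%N = (k <= i)%N && (l == i - k)%N.
Proof. apply/idP/idP => [/eqP H | /andP [H1 /eqP H2]]; [apply/andP; split; [|apply/eqP]|apply/eqP]; lia. Qed.

Lemma delta_nat (T : nmodType) (a b c : nat) (P : bool) (F : nat -> T) :
  \sum_(a <= l < b) (F l *+ (P && (l == c))) = if P && (a <= c < b)%N then F c else 0.
Proof.
case: P => /=; last by rewrite big1.
case: ifP => H.
  rewrite (bigD1_seq c) ?iota_uniq ?mem_index_iota //= eqxx big1 ?addr0 // => l /negbTE ->; by [].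
by rewrite big1_seq // => l; rewrite mem_index_iota => /andP [_ Hl]; case: eqP Hl H => [->->|].
Qed.

Lemma toepT_E (C : pzRingType) n m (xi : nat -> C) (i k : 'I_n) :
  toepT n m xi i k = xi 0%N *+ (k == i :> nat) +
    \sum_(1 <= l < m.+1) (xi l *+ (k == i + l :> nat)%N + xi l *+ (i == k + l :> nat)%N).
Proof.
rewrite mxE.
rewrite (eq_bigr (fun l => xi l *+ ((i <= k)%N && (l == k - i)%N) + xi l *+ ((k <= i)%N && (l == i - k)%N))); last first.
  by move=> l _; congr (_ *+ (nat_of_bool _) + _ *+ (nat_of_bool _)); apply/idP/idP; lia.
rewrite big_split /=.
rewrite !delta_nat.
case: (ltngtP i k) => H /=.
- rewrite mulr0n add0r addr0 ltnS.
  by case: ifP => H1; [rewrite ifT //|rewrite ifF //]; lia.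
- rewrite mulr0n add0r add0r ltnS.
  by case: ifP => H1; [rewrite ifT //|rewrite ifF //]; lia.
- by rewrite H subnn /= !addr0 mulr1n.
Qed.

Lemma hankH_E (C : pzRingType) n m (xi : nat -> C) (i k : 'I_n) : (m <= n - 1)%N ->
  hankH n m xi i k =
    \sum_(1 <= l < m.+1) (xi l *+ (i + k + 1 == l)%N + xi l *+ (i + k + l == n.*2)%N).
Proof.
move=> Hm.
rewrite mxE.
rewrite (eq_bigr (fun l => xi l *+ (true && (l == i + k + 1)%N) + xi l *+ ((i + k <= n.*2)%N && (l == n.*2 - (i + k))%N))); last first.
  by move=> l _; congr (_ *+ (nat_of_bool _) + _ *+ (nat_of_bool _)); apply/idP/idP; lia.
rewrite big_split !delta_nat /=.
have Hi := ltn_ord i; have Hk := ltn_ord k.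
case: ifP => H1.
  rewrite ifT; last by lia.
  rewrite ifF; last by lia.
  by rewrite addr0; congr (xi _); lia.
rewrite [X in _ = X + _]ifF; last by lia.
rewrite add0r.
case: ifP => H2.
  by rewrite ifT; [congr (xi _)|]; lia.
by rewrite ifF //; lia.
Qed.
From mathcomp Require Import ring lra.

Lemma delta_ord (T : nmodType) (n c : nat) (P : bool) (F : nat -> T) :
  \sum_(k < n) (F k *+ (P && (k == c :> nat))) = if P && (c < n)%N then F c else 0.
Proof.
rewrite -(big_mkord xpredT (fun k => F k *+ (P && (k == c)))) delta_nat.
by case: P.
Qed.


Section PerL.
Variable R : realType.
Variables (n : nat) (th : R).
Hypothesis Hth : forall y, sin ((n.*2.+1)%:R * th - y) = - sin y.
Definition S (t : R) := sin ((t + 2^-1) * th).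

Lemma SrefR (a : nat) : (a <= n.*2)%N -> S (n.*2 - a)%:R = - S a%:R.
Proof.
move=> Ha; rewrite /S -Hth; congr sin.
rewrite natrB // -addn1 natrD; by field.
Qed.

Lemma SrefL (a b : nat) : (a < b)%N -> S (b - a - 1)%:R = - S (a%:R - b%:R).
Proof.
move=> Hab; rewrite /S -sinN; congr sin.
rewrite -subnDA natrB ?addn1 // -natr1; by field.
Qed.

Lemma Ssum (a b : nat) : S (a + b)%:R + S (a%:R - b%:R) = 2 * cos (b%:R * th) * S a%:R.
Proof.
rewrite /S natrD.
have -> : (a%:R + b%:R + 2^-1) * th = (a%:R + 2^-1) * th + b%:R * th by ring.
have -> : (a%:R - b%:R + 2^-1) * th = (a%:R + 2^-1) * th - b%:R * th by ring.
rewrite sinD sinB; ring.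
Qed.

Definition F (k : nat) : R[i] := ((S k%:R)%:C)%C.

Lemma F_R a : (a <= n.*2)%N -> F (n.*2 - a) = - F a.
Proof. by move=> H; rewrite /F SrefR // rmorphN. Qed.
Lemma F_L a b : (a < b)%N -> F (b - a - 1) = - ((S (a%:R - b%:R))%:C)%C.
Proof. by move=> H; rewrite /F SrefL // rmorphN. Qed.
Lemma F_B a b : (b <= a)%N -> F (a - b) = ((S (a%:R - b%:R))%:C)%C.
Proof. by move=> H; rewrite /F natrB. Qed.
Lemma F_n : F n = 0.
Proof.
have H := @SrefR n (ltac:(lia) : (n <= n.*2)%N).
rewrite (_ : (n.*2 - n = n)%N) in H; last by lia.
have H2 : S n%:R = 0 by lra.
by rewrite /F H2.
Qed.

Lemma perl m (i : 'I_n) l : (m <= n - 1)%N -> (1 <= l <= m)%N ->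
  \sum_(k < n) (F k *+ (k == i + l :> nat)%N + F k *+ (i == k + l :> nat)%N
     - F k *+ (i + k + 1 == l)%N - F k *+ (i + k + l == n.*2)%N)
  = ((2 * cos (l%:R * th))%:C)%C * F i.
Proof.
move=> Hm Hl.
rewrite (eq_bigr (fun k : 'I_n => F k *+ (true && (k == i + l :> nat)%N)
   + F k *+ ((l <= i)%N && (k == i - l :> nat)%N)
   - F k *+ ((i < l)%N && (k == l - i - 1 :> nat)%N)
   - F k *+ ((i + l <= n.*2)%N && (k == n.*2 - (i + l) :> nat)%N))); last first.
  by move=> k _; congr (_ *+ (nat_of_bool _) + _ *+ (nat_of_bool _) - _ *+ (nat_of_bool _) - _ *+ (nat_of_bool _)); apply/idP/idP; lia.
rewrite !sumrB big_split !delta_ord /=.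
have Hi := ltn_ord i.
have key : F (i + l)%N + ((S (i%:R - l%:R))%:C)%C = ((2 * cos (l%:R * th))%:C)%C * F i.
  by have := congr1 (real_complex R) (Ssum i l); rewrite rmorphD rmorphM natrD /F natrD.
rewrite -key.
repeat (case: ifP => ?); try lia.
all: rewrite ?F_R ?F_L ?F_B; try lia.
all: try (rewrite (_ : (i + l = n)%N); last by lia); rewrite ?F_n; ring.
Qed.

Lemma delta_ord1 (T : nmodType) (c : nat) (G : nat -> T) :
  (c < n)%N -> \sum_(k < n) (G k *+ (k == c :> nat)) = G c.
Proof.
move=> Hc; have := delta_ord _ n c true G; rewrite /= Hc => <-.
by [].
Qed.

Lemma main_gen m (xi : nat -> R[i]) : (m <= n - 1)%N ->
  (toepT n m xi - hankH n m xi) *m (\col_(k < n) F k)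
  = symb m xi th *: (\col_(k < n) F k).
Proof.
move=> Hm; apply/matrixP => i j; rewrite !mxE.
rewrite (eq_bigr (fun k : 'I_n => xi 0%N * (F k *+ (k == i :> nat)) +
  \sum_(1 <= l < m.+1) xi l * (F k *+ (k == i + l :> nat)%N + F k *+ (i == k + l :> nat)%N
     - F k *+ (i + k + 1 == l)%N - F k *+ (i + k + l == n.*2)%N))); last first.
  move=> k _.
  have -> : (toepT n m xi - hankH n m xi) i k = toepT n m xi i k - hankH n m xi i k by rewrite !mxE.
  rewrite [(\col_k0 F k0) k j]mxE toepT_E hankH_E // -addrA -sumrB mulrDl mulr_suml.
  congr (_ + _); first ring.
  by apply: eq_bigr => l _; ring.
rewrite big_split /= -mulr_sumr delta_ord1 //.
rewrite exchange_big /=.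
rewrite (eq_big_nat _ _ (F2 := fun l => xi l * (((2 * cos (l%:R * th))%:C)%C * F i))); last first.
  by move=> l Hl; rewrite -mulr_sumr (perl m) //; lia.
rewrite /symb mulrDl mulr_sumr mulr_suml.
congr (_ + _); apply: eq_bigr => l _.
rewrite rmorphM /= rmorph_nat; ring.
Qed.
End PerL.

Theorem mainTheorem1 (R : realType) (n m : nat) (alpha beta : nat -> R[i]) (C : R[i]) :
  (2 <= n)%N -> (1 <= m)%N -> (m <= n - 1)%N ->
  (toepT n m beta - hankH n m beta) \in unitmx ->
  C != 0 ->
  let A := toepT n m alpha - hankH n m alpha in
  let B := toepT n m beta - hankH n m beta in
  let h : R := 1 / (n%:R + 1 / 2%:R) in
  forall j : nat, (1 <= j <= n)%N ->
    let lambda := symb m alpha (j%:R * pi * h) / symb m beta (j%:R * pi * h) in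
    let x : 'cV[R[i]]_n :=
      \col_(k < n) (C * ((sin (j%:R * pi * (k.+1%:R - 1 / 2%:R) * h))%:C)%C) in
    A *m x = lambda *: (B *m x).
Proof.
move=> Hn Hm1 Hm Hunit HC A B h j Hj lambda x.
have Hpos : n%:R + 1 / 2%:R != 0 :> R.
  by rewrite lt0r_neq0 // ltr_wpDl // ?ler0n // divr_gt0 // ltr0n.
have Hth : forall y, sin ((n.*2.+1)%:R * (j%:R * pi * h) - y) = - sin y.
  move=> y; rewrite sinB.
  have E : (n.*2.+1)%:R * (j%:R * pi * h) = 0 + (pi *+ 2) *+ j.
    rewrite /h add0r -mulrnA -(mulr_natr pi (2 * j)) -natr1 -muln2 !natrM. field.
    by have hn : (0:R) <= n%:R := ler0n R n; lra.
  rewrite E periodicn; last exact: sinD2pi.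
  rewrite add0r -[(pi *+ 2) *+ j]add0r periodicn; last exact: cosD2pi.
  rewrite sin0 cos0; ring.
set th := j%:R * pi * h.
have Ex : x = C *: (\col_(k < n) F R th k).
  apply/matrixP => k l; rewrite !mxE /F /S /th; congr (_ * (sin _)%:C)%C.
  by rewrite -natr1; field.
rewrite Ex /A /B -!scalemxAr !(@main_gen R n th Hth) //.
set v := \col_(k < n) F R th k.
case: (eqVneq (symb m beta th) 0) => Hb.
  have v0 : v = 0.
    rewrite -(mulKmx Hunit v).
    have -> : (toepT n m beta - hankH n m beta) *m v = symb m beta th *: v by apply: (@main_gen R n th Hth).
    by rewrite Hb scale0r mulmx0.
  by rewrite v0 !scaler0.
rewrite !scalerA; congr (_ *: _); rewrite /lambda -/th.
by field.
Qed.
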